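(* Let $k,l\in\hat I$, $u,v\in\mathbb C^\times$, and consider $V^{(k)}(u)\otimes V^{(l)}(v)$ with basis $[u]^{(k)}_i\otimes[v]^{(l)}_j$ ($i,j\in\mathbb Z$) and the action of $\mathcal E_n$ given by the coproduct. Then: 1. If $uq_1^{nm+k-l}=v$ for some $m\in\mathbb Z$, the action of $\mathcal E_n$ is not well-defined; in all other cases it is well-defined. 2. If $uq_2q_1^{nm+k-l}=v$ for some $m\in\mathbb Z$, the span of the vectors $[u]^{(k)}_i\otimes[v]^{(l)}_j$ with $i\ge j+nm+k-l$ is a submodule. This submodule and the corresponding quotient module are tame, irreducible $\mathcal E_n$-modules of level $1$. 3. If $uq_2^{-1}q_1^{nm+k-l}=v$ for some $m\in\mathbb Z$, the span of the vectors $[u]^{(k)}_i\otimes[v]^{(l)}_j$ with $i\ge j+nm+k-l+1$ is a submodule. This submodule and the quotient module are tame, irreducible $\mathcal E_n$-modules of level $1$. 4. In all other cases $V^{(k)}(u)\otimes V^{(l)}(v)$ is a tame, irreducible $\mathcal E_n$-module of level $1$.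
   Context: Fix an integer $n\ge3$ and let $\hat I=\{0,1,\dots,n-1\}$. Indices in $\hat I$ are taken cyclically modulo $n$, and $a\equiv b$ means $n\mid a-b$. Let $a_{ii}=2$, $a_{i,i\pm1}=-1$ and $a_{ij}=0$ otherwise. Let $m_{i-1,i}=-1$, $m_{i,i-1}=1$ and $m_{ij}=0$ otherwise. Let $q,d\in\mathbb C^\times$ and $q_1=d/q$, $q_2=q^2$, $q_3=1/(dq)$. Assume genericity: $q_1^aq_2^bq_3^c=1$ ($a,b,c\in\mathbb Z$) only if $a=b=c$. Let $\delta(z)=\sum_{m\in\mathbb Z}z^m$ and $\psi(z)=\frac{q-q^{-1}z}{1-z}$. The algebra $\mathcal E_n$ has generators $E_{i,m},F_{i,m},H_{i,l}$ ($l\ne0$) and $K_i^{\pm1}$, with series $E_i(z)=\sum E_{i,m}z^{-m}$, $F_i(z)=\sum F_{i,m}z^{-m}$ and $K_i^\pm(z)=K_i^{\pm1}\exp(\pm(q-q^{-1})\sum_{m\ge1}H_{i,\pm m}z^{\mp m})$. The relations are: - $K_iK_i^{-1}=1$, and the $K$'s commute; - $(q^{a_{ij}}w-d^{m_{ij}}z)K_i^\pm(z)E_j(w)=(w-d^{m_{ij}}q^{a_{ij}}z)E_j(w)K_i^\pm(z)$; - $(w-d^{m_{ij}}q^{a_{ij}}z)K_i^\pm(z)F_j(w)=(q^{a_{ij}}w-d^{m_{ij}}z)F_j(w)K_i^\pm(z)$; - $[E_i(z),F_j(w)]=\frac{\delta_{ij}}{q-q^{-1}}(\delta(w/z)K_i^+(w)-\delta(z/w)K_i^-(z))$;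 - $(d^{m_{ij}}z-q^{a_{ij}}w)E_i(z)E_j(w)=(d^{m_{ij}}q^{a_{ij}}z-w)E_j(w)E_i(z)$; - $(d^{m_{ij}}z-q^{-a_{ij}}w)F_i(z)F_j(w)=(d^{m_{ij}}q^{-a_{ij}}z-w)F_j(w)F_i(z)$; - the cubic Serre relations $E_i(z_1)E_i(z_2)E_{i\pm1}(w)-(q+q^{-1})E_i(z_1)E_{i\pm1}(w)E_i(z_2)+E_{i\pm1}(w)E_i(z_1)E_i(z_2)+(z_1\leftrightarrow z_2)=0$, and likewise for $F$; - $[E_i(z),E_j(w)]=[F_i(z),F_j(w)]=0$ for $i\not\equiv j,j\pm1$. Let $\kappa=\prod K_i$. A module has level $K$ if $\kappa^{-1}$ acts by $K$. It is tame if the $K_i^\pm(z)$ are simultaneously diagonalizable with one-dimensional joint eigenspaces. The vector representation $V^{(k)}(u)$ ($k\in\hat I$, $u\in\mathbb C^\times$) has basis $[u]^{(k)}_j$, $j\in\mathbb Z$, with action: - $E_i(z)[u]^{(k)}_j=\delta(q_1^{j+1}u/z)[u]^{(k)}_{j+1}$ if $i+j+1\equiv k$, else $0$; - $F_i(z)[u]^{(k)}_{j+1}=\delta(q_1^{j+1}u/z)[u]^{(k)}_j$ if $i+j+1\equiv k$, else $0$; - $K_i^\pm(z)[u]^{(k)}_j$ is $\psi(q_1^ju/z)[u]^{(k)}_j$ if $j+i\equiv k$, is $\psi(q_1^jq_3^{-1}u/z)^{-1}[u]^{(k)}_j$ if $j+i+1\equiv k$, and is $[u]^{(k)}_j$ otherwise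 (rational functions expanded in $z^{\mp1}$). Tensor products carry the action defined by the coproduct: $\Delta K_i^\pm(z)=K_i^\pm(z)\otimes K_i^\pm(z)$, $\Delta E_i(z)=E_i(z)\otimes1+K_i^-(z)\otimes E_i(z)$, $\Delta F_i(z)=F_i(z)\otimes K_i^+(z)+1\otimes F_i(z)$. The resulting matrix coefficients are products $g(z)\delta(c/z)$ of a rational function $g$ (coming from a $K$-eigenvalue) and a delta function. They are interpreted as $g(c)\delta(c/z)$, and the action is called well-defined when $g$ never has a pole at the relevant point $c$. *)

(* Defs.v *)
(* C is modelled as R[i] for an arbitrary realType R (all are ≅ ℝ). *)
From HB Require Import structures.
From mathcomp Require Import all_boot all_order all_algebra complex reals.
Set Implicit Arguments. Unset Strict Implicit. Unset Printing Implicit Defensive.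
Import Order.TTheory GRing.Theory Num.Theory.
Local Open Scope ring_scope.

Inductive gen (n : nat) : Type :=
| GE of 'I_n & int
| GF of 'I_n & int
| GH of 'I_n & int
| GK of 'I_n
| GKinv of 'I_n.

Definition valid_gen n (g : gen n) : bool :=
  if g is GH _ l then l != 0 else true.
(* generators whose generating series are the K_s^{\pm}(z) *)
Definition cartan_gen n (g : gen n) : bool :=
  match g with GH _ l => l != 0 | GK _ | GKinv _ => true | _ => false end.

Section Toroidal.
Variable R : realType.
Local Notation C := R[i].
Variables (n : nat) (q d : C).

Definition q1 : C := d / q.
Definition q2 : C := q ^+ 2.
Definition q3 : C := (d * q)^-1.

Definition generic : Prop :=
  forall a b c : int, q1 ^ a * q2 ^ b * q3 ^ c = 1 -> a = b /\ b = c.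

Definition congr (a b : int) : bool := (n%:Z %| (a - b))%Z.

(* psi(x) = (q - q^{-1} x)/(1 - x) : numerator and denominator *)
Definition psi_num (x : C) : C := q - q^-1 * x.
Definition psi_den (x : C) : C := 1 - x.

(* Eigenvalue of K_s^{\pm}(z) on [w]^{(kk)}_j in V^{(kk)}(w), as the rational
   function Knum(z)/Kden(z) in z:
   psi(q1^j w / z)              if j + s ≡ kk,
   psi(q1^j q3^{-1} w / z)^{-1} if j + s + 1 ≡ kk,
   1                            otherwise. *)
Section Single.
Variables (kk : 'I_n) (w : C) (s : 'I_n) (j : int).
Definition Knum (z : C) : C :=
  if congr (j + s%:Z) kk then psi_num (q1 ^ j * w / z)
  else if congr (j + s%:Z + 1) kk then psi_den (q1 ^ j * q3^-1 * w / z)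
  else 1.
Definition Kden (z : C) : C :=
  if congr (j + s%:Z) kk then psi_den (q1 ^ j * w / z)
  else if congr (j + s%:Z + 1) kk then psi_num (q1 ^ j * q3^-1 * w / z)
  else 1.
(* value g(c) of the rational function, and "g has a pole at c"
   (numerator and denominator are of degree <= 1, so this is the exact pole test) *)
Definition Kval (c : C) : C := Knum c / Kden c.
Definition Kpole (c : C) : bool := (Kden c == 0) && (Knum c != 0).

(* eigenvalue of K_s (constant term of the expansion of K_s^+(z)) *)
Definition Keig : C :=
  if congr (j + s%:Z) kk then q
  else if congr (j + s%:Z + 1) kk then q^-1
  else 1.
(* eigenvalue of H_{s,m}, m <> 0, read off from
   log psi(a/z) = log q + sum_{m>=1} (1 - q^{-2m}) a^m z^{-m} / m   (|z| large)
   log psi(a/z) = -log q + sum_{p>=1} (1 - q^{2p}) a^{-p} z^p / p   (|z| small) *)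
Definition hcoef (m : int) (a : C) : C :=
  (1 - q ^ (- (2 * m))) * a ^ m / (m%:~R * (q - q^-1)).
Definition Heig (m : int) : C :=
  if congr (j + s%:Z) kk then hcoef m (q1 ^ j * w)
  else if congr (j + s%:Z + 1) kk then - hcoef m (q1 ^ j * q3^-1 * w)
  else 0.
End Single.

Section Tensor.
Variables (k l : 'I_n) (u v : C).

(* vectors: functions giving the coefficient of [u]_i ⊗ [v]_j *)
Definition vec := int * int -> C.

(* Matrix coefficients of the coproduct action on basis vectors:
   Delta E_s(z) = E_s(z) ⊗ 1 + K_s^-(z) ⊗ E_s(z);  E_{s,m} = coeff of z^{-m};
   delta(c/z) = sum_m c^m z^{-m}, and g(z) delta(c/z) read as g(c) delta(c/z). *)
(* coefficient of [u]_{i+1}⊗[v]_j in E_{s,m}([u]_i⊗[v]_j) *)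
Definition Ecoef1 (s : 'I_n) (m i j : int) : C :=
  if congr (s%:Z + i + 1) k then (q1 ^ (i + 1) * u) ^ m else 0.
(* coefficient of [u]_i⊗[v]_{j+1} in E_{s,m}([u]_i⊗[v]_j) *)
Definition Ecoef2 (s : 'I_n) (m i j : int) : C :=
  if congr (s%:Z + j + 1) l
  then Kval k u s i (q1 ^ (j + 1) * v) * (q1 ^ (j + 1) * v) ^ m else 0.
(* Delta F_s(z) = F_s(z) ⊗ K_s^+(z) + 1 ⊗ F_s(z) *)
(* coefficient of [u]_{i-1}⊗[v]_j in F_{s,m}([u]_i⊗[v]_j) *)
Definition Fcoef1 (s : 'I_n) (m i j : int) : C :=
  if congr (s%:Z + i) k
  then Kval l v s j (q1 ^ i * u) * (q1 ^ i * u) ^ m else 0.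
(* coefficient of [u]_i⊗[v]_{j-1} in F_{s,m}([u]_i⊗[v]_j) *)
Definition Fcoef2 (s : 'I_n) (m i j : int) : C :=
  if congr (s%:Z + j) l then (q1 ^ j * v) ^ m else 0.
(* Delta K^\pm(z) = K^\pm(z) ⊗ K^\pm(z): K multiplies, H adds *)
Definition Kcoef (s : 'I_n) (i j : int) : C := Keig k s i * Keig l s j.
Definition Hcoef (s : 'I_n) (m i j : int) : C := Heig k u s i m + Heig l v s j m.

Definition act (g : gen n) (x : vec) : vec :=
  fun p => let i := p.1 in let j := p.2 in
  match g with
  | GE s m => Ecoef1 s m (i - 1) j * x (i - 1, j) + Ecoef2 s m i (j - 1) * x (i, j - 1)
  | GF s m => Fcoef1 s m (i + 1) j * x (i + 1, j) + Fcoef2 s m i (j + 1) * x (i, j + 1)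
  | GH s m => Hcoef s m i j * x p
  | GK s => Kcoef s i j * x p
  | GKinv s => (Kcoef s i j)^-1 * x p
  end.

(* well-definedness: no coefficient g(z) delta(c/z) has g with a pole at c *)
Definition well_defined : Prop :=
  forall (s : 'I_n) (i j : int),
    (congr (s%:Z + j + 1) l -> ~~ Kpole k u s i (q1 ^ (j + 1) * v)) /\
    (congr (s%:Z + i) k -> ~~ Kpole l v s j (q1 ^ i * u)).

(* A subquotient given by a set D of basis indices: the span of the basis
   vectors [u]_i⊗[v]_j with D (i,j); its action is the compression of act.
   For D the full set this is the module, for D a submodule region this is
   the submodule, and for D the complement of a submodule region this is
   (isomorphic to) the quotient module. *)
Definition inM (D : int * int -> bool) (x : vec) : Prop :=
  (exists sq : seq (int * int), forall p, p \notin sq -> x p = 0) /\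
  (forall p, ~~ D p -> x p = 0).

Definition actD (D : int * int -> bool) (g : gen n) (x : vec) : vec :=
  fun p => if D p then act g x p else 0.

Definition zerov : vec := fun _ => 0.

Definition is_submodule (D : int * int -> bool) : Prop :=
  forall g, valid_gen g -> forall x, inM D x -> inM D (act g x).

Definition subspace (S : vec -> Prop) : Prop :=
  S zerov /\ (forall x y, S x -> S y -> S (fun p => x p + y p)) /\
  (forall (c : C) x, S x -> S (fun p => c * x p)).

Definition irreducible (D : int * int -> bool) : Prop :=
  (exists x, inM D x /\ x <> zerov) /\
  forall S : vec -> Prop, subspace S -> (forall x, S x -> inM D x) ->
    (forall g, valid_gen g -> forall x, S x -> S (actD D g x)) ->
    (exists x, S x /\ x <> zerov) -> forall x, inM D x -> S x.

Definition joint_eig (D : int * int -> bool) (lam : gen n -> C) (x : vec) : Prop :=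
  inM D x /\ x <> zerov /\
  forall g, cartan_gen g -> actD D g x = (fun p => lam g * x p).

Definition tame (D : int * int -> bool) : Prop :=
  (forall x, inM D x -> exists (r : nat) (xs : nat -> vec) (lams : nat -> gen n -> C),
      (forall t, (t < r)%N -> joint_eig D (lams t) (xs t)) /\
      x = (fun p => \sum_(t < r) xs t p)) /\
  (forall lam x y, joint_eig D lam x -> joint_eig D lam y ->
      exists c : C, y = (fun p => c * x p)).

Definition kappa_inv (D : int * int -> bool) (x : vec) : vec :=
  foldr (fun s acc => actD D (GKinv s) acc) x (enum 'I_n).

Definition level1 (D : int * int -> bool) : Prop :=
  forall x, inM D x -> kappa_inv D x = x.

Definition tame_irr_level1 (D : int * int -> bool) : Prop :=
  tame D /\ irreducible D /\ level1 D.

Definition region (c : int) : int * int -> bool := fun p => p.2 + c <= p.1.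
Definition coregion (c : int) : int * int -> bool := fun p => ~~ region c p.
Definition fullregion : int * int -> bool := fun _ => true.

End Tensor.
End Toroidal.

(* Main.v *)
Require Import Defs.
From HB Require Import structures.
From mathcomp Require Import all_boot all_order all_algebra complex reals.
From mathcomp Require Import ring lra zify.
From Stdlib Require Import FunctionalExtensionality Classical.
Import Order.TTheory GRing.Theory Num.Theory.
Local Open Scope ring_scope.
Set Implicit Arguments. Unset Strict Implicit. Unset Printing Implicit Defensive.



Section Basics.
Variable R : realType.
Local Notation C := R[i].
Variables (n : nat) (q d : C).
Hypothesis Hn : (3 <= n)%N.
Hypothesis Hq : q != 0.
Hypothesis Hd : d != 0.
Hypothesis Hgen : generic q d.

Local Notation Q1 := (q1 q d).
Local Notation Q2 := (q2 q).
Local Notation Q3 := (q3 q d).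

Lemma Q1_neq0 : Q1 != 0.
Proof. by rewrite /q1 mulf_neq0 ?invr_eq0. Qed.
Lemma Q2_neq0 : Q2 != 0.
Proof. by rewrite /q2 expf_neq0. Qed.
Lemma Q3_neq0 : Q3 != 0.
Proof. by rewrite /q3 invr_eq0 mulf_neq0. Qed.
Lemma Q123 : Q1 * Q2 * Q3 = 1.
Proof. rewrite /q1 /q2 /q3; field. by rewrite Hq Hd. Qed.
Lemma Q3inv : Q3^-1 = Q1 * Q2.
Proof. by rewrite /q1 /q2 /q3 invrK; field. Qed.

Lemma gen0 (a b : int) : Q1 ^ a * Q2 ^ b = 1 -> a = 0 /\ b = 0.
Proof.
move=> H; have := @Hgen a b 0; rewrite expr0z mulr1 => /(_ H) [-> ->]; done.
Qed.

Lemma gen_eq (a b a' b' : int) : Q1 ^ a * Q2 ^ b = Q1 ^ a' * Q2 ^ b' -> a = a' /\ b = b'.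
Proof.
move=> H.
have : Q1 ^ (a - a') * Q2 ^ (b - b') = 1.
  have n1 := Q1_neq0; have n2 := Q2_neq0.
  have h1 : Q1 ^ a' != 0 by rewrite expfz_neq0.
  have h2 : Q2 ^ b' != 0 by rewrite expfz_neq0.
  rewrite !expfzDr // -!invr_expz.
  rewrite mulrACA H.
  by field; rewrite h1 h2.
move/gen0 => [h1 h2]; split; apply/eqP; rewrite -subr_eq0; apply/eqP; done.
Qed.

End Basics.



Section Cong.
Variable n : nat.
Hypothesis Hn : (3 <= n)%N.

Lemma congrE (a b a' b' : int) : a - b = a' - b' -> congr n a b = congr n a' b'.
Proof. by rewrite /congr => ->. Qed.

Lemma congr_refl a : congr n a a.
Proof. by rewrite /congr subrr dvdz0. Qed.

Lemma congr_sym a b : congr n a b -> congr n b a.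
Proof. by rewrite /congr -opprB rpredN. Qed.

Lemma congr_trans a b c : congr n a b -> congr n b c -> congr n a c.
Proof.
rewrite /congr => h1 h2; have := rpredD h1 h2.
by rewrite addrA subrK.
Qed.


Lemma congr_mul (t : int) : congr n (n%:Z * t) 0.
Proof. by rewrite /congr subr0 dvdz_mulr. Qed.

Lemma dvd_small (x : int) : congr n x 0 -> `|x| < n%:Z -> x = 0.
Proof.
rewrite /congr subr0 => /dvdzP [t ->] h.
have hn : (3 <= n%:Z) by rewrite lez_nat.
suff : t = 0 by move=> ->; rewrite mul0r.
move: h; rewrite normrM (gtr0_norm (_ : 0 < n%:Z)); last by lia.
move=> h; apply/eqP; rewrite -normr_eq0; apply/eqP.
have : `|t| >= 0 by apply: normr_ge0.
nia.
Qed.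

Lemma res_ex (x : int) : exists s : 'I_n, congr n (nat_of_ord s)%:Z x.
Proof.
have n0 : (0 < n%:Z) by rewrite ltz_nat; lia.
have h0 := modz_ge0 x (lt0r_neq0 n0 : n%:Z != 0).
have h1 := ltz_pmod x n0.
have hb : (absz (x %% n%:Z)%Z < n)%N.
  by rewrite -ltz_nat gez0_abs.
exists (Ordinal hb) => /=.
rewrite gez0_abs // /congr.
rewrite {2}(divz_eq x n%:Z) opprD addrCA subrr addr0 rpredN.
by rewrite dvdz_mull.
Qed.

Lemma res_uniq (s s' : 'I_n) : congr n (nat_of_ord s)%:Z (nat_of_ord s')%:Z -> s = s'.
Proof.
move=> h.
have h' : congr n ((nat_of_ord s)%:Z - (nat_of_ord s')%:Z) 0.
  by move: h; rewrite (@congrE s s' (s%:Z - s'%:Z) 0) // subr0.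
have hs := ltn_ord s; have hs' := ltn_ord s'.
have := dvd_small h'.
move=> H; apply/val_inj => /=.
have : (nat_of_ord s)%:Z - (nat_of_ord s')%:Z = 0.
  apply: H.
  rewrite -ltz_nat in hs; rewrite -ltz_nat in hs'.
  rewrite ltr_norml; apply/andP; split; lia.
move/eqP; rewrite subr_eq0 => /eqP [].
done.
Qed.

Lemma congr_01 a b : congr n a b -> congr n (a + 1) b -> False.
Proof.
move=> h1 h2.
have h : congr n 1 0.
  have := congr_trans h2 (congr_sym h1).
  by rewrite (@congrE _ _ 1 0) //; ring.
have := dvd_small h; rewrite normr1 => /(_ _); lia.
Qed.

End Cong.



Section Big.
Variable n : nat.
Hypothesis Hn : (3 <= n)%N.

Lemma congr_c a b a' b' c : congr n a b -> congr n a' b' -> a - b - (a' - b') = c -> congr n c 0.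
Proof.
rewrite /congr => h1 h2 <-; rewrite subr0; exact: rpredB.
Qed.

Lemma congr_sub a b a' b' : congr n a b -> congr n a' b' -> congr n (a - a') (b - b').
Proof.
rewrite /congr => h1 h2; have := rpredB h1 h2.
by rewrite (_ : a - b - (a' - b') = a - a' - (b - b')) //; ring.
Qed.

Lemma big_two (T : Type) (idx : T) (op : Monoid.com_law idx) (c1 c2 : 'I_n -> bool)
  (A B : T) (s1 s2 : 'I_n) : c1 s1 -> c2 s2 -> (forall s, c1 s -> s = s1) ->
  (forall s, c2 s -> s = s2) -> s1 != s2 ->
  \big[op/idx]_s (if c1 s then A else if c2 s then B else idx) = op A B.
Proof.
move=> h1 h2 u1 u2 ne.
rewrite (bigD1 s1) //= h1 (bigD1 s2) //=; last by rewrite eq_sym.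
have -> : c1 s2 = false.
  by apply/negP => /u1 e; move: ne; rewrite e eqxx.
rewrite h2 big1 ?Monoid.mulm1 // => s /andP [ns1 ns2].
have -> : c1 s = false by apply/negP => /u1 e; move: ns1; rewrite e eqxx.
have -> : c2 s = false by apply/negP => /u2 e; move: ns2; rewrite e eqxx.
done.
Qed.

Lemma branch_uniq (x : int) (kk : 'I_n) (s s' : 'I_n) :
  congr n (x + s%:Z) kk -> congr n (x + s'%:Z) kk -> s = s'.
Proof.
move=> h1 h2; apply: res_uniq => //.
have h1' : congr n s (kk%:Z - x) by move: h1; rewrite (congrE n (a':=s) (b':=(kk%:Z - x))) //; ring.
have h2' : congr n s' (kk%:Z - x) by move: h2; rewrite (congrE n (a':=s') (b':=(kk%:Z - x))) //; ring.
exact: congr_trans h1' (congr_sym h2').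
Qed.

Lemma big_branch (T : Type) (idx : T) (op : Monoid.com_law idx) (x : int) (kk : 'I_n) (A B : T) :
  \big[op/idx]_(s : 'I_n) (if congr n (x + s%:Z) kk then A else if congr n (x + s%:Z + 1) kk then B else idx)
  = op A B.
Proof.
have [s1 h1] := res_ex Hn (kk%:Z - x).
have [s2 h2] := res_ex Hn (kk%:Z - x - 1).
have c1 : congr n (x + s1%:Z) kk.
  by move: h1; rewrite (congrE n (a':=x + s1%:Z) (b':=kk%:Z)) //; ring.
have c2 : congr n (x + s2%:Z + 1) kk.
  by move: h2; rewrite (congrE n (a':=x + s2%:Z + 1) (b':=kk%:Z)) //; ring.
apply: (big_two (c1:=fun s : 'I_n => congr n (x + s%:Z) kk) (c2:=fun s : 'I_n => congr n (x + s%:Z + 1) kk) op A B c1 c2).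
- by move=> s h; apply: branch_uniq h c1.
- move=> s h.
  have e : forall t : 'I_n, x + t%:Z + 1 = (x + 1) + t%:Z by move=> t; ring.
  rewrite e in h; rewrite e in c2; exact: branch_uniq h c2.
- apply/eqP => e; subst s2.
  have e1 : x + s1%:Z + 1 - kk%:Z - (x + s1%:Z - kk%:Z) = 1 by ring.
  have := dvd_small Hn (congr_c c2 c1 e1).
  rewrite normr1 => H; have : (1:int) = 0 by apply: H; lia.
  done.
Qed.

End Big.



Section Main.
Variable R : realType.
Local Notation C := R[i].
Variables (n : nat) (q d : C).
Hypothesis Hn : (3 <= n)%N.
Hypothesis Hq : q != 0.
Hypothesis Hd : d != 0.
Hypothesis Hgen : generic q d.
Variables (k l : 'I_n) (u v : C).
Hypothesis Hu : u != 0.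
Hypothesis Hv : v != 0.

Local Notation Q1 := (q1 q d).
Local Notation Q2 := (q2 q).
Local Notation Q3 := (q3 q d).

Lemma prod_Kcoef (i j : int) : \prod_(s : 'I_n) Kcoef q k l s i j = 1.
Proof.
rewrite /Kcoef big_split /= /Keig !(big_branch Hn *%R).
by rewrite /= !divff // mulr1.
Qed.

Lemma level1_all D : level1 q d k l u v D.
Proof.
move=> x [_ hD]; rewrite /kappa_inv.
have key : forall r, foldr (fun s acc => actD q d k l u v D (GKinv s) acc) x r
   = fun p => (\prod_(s <- r) (Kcoef q k l s p.1 p.2)^-1) * x p.
  elim=> [|s r IH]; apply: functional_extensionality => p.
    by rewrite /= big_nil mul1r.
  rewrite /= big_cons IH /actD /=.
  case: ifP => Dp; first by rewrite mulrA.
  by rewrite hD ?Dp // mulr0.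
rewrite key; apply: functional_extensionality => p.
by rewrite big_enum /= prodfV prod_Kcoef invr1 mul1r.
Qed.


Definition hg (m : int) : C := (1 - q ^ (- (2 * m))) / (m%:~R * (q - q^-1)).

Lemma hcoef_lin m a : hcoef q m a = hg m * a ^ m.
Proof. by rewrite /hcoef /hg mulrAC. Qed.

Lemma Q2_pow (m : int) : Q2 ^ m = q ^ (2 * m).
Proof. by rewrite /q2 -exprz_exp. Qed.

Lemma Q1inj (a b : int) w : w != 0 -> Q1 ^ a * w = Q1 ^ b * w -> a = b.
Proof.
move=> hw /(mulIf hw) e.
have := @gen_eq R q d Hq Hd Hgen a 0 b 0.
by rewrite !expr0z !mulr1 => /(_ e) [].
Qed.

Lemma qq_neq0 : q - q^-1 != 0.
Proof.
apply/eqP => e.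
have e2 : Q2 = 1.
  by rewrite /q2 expr2; apply: (mulIf (invr_neq0 Hq)); rewrite mulrK // mul1r; apply/eqP; rewrite -subr_eq0 e.
have := @gen_eq R q d Hq Hd Hgen 0 1 0 0.
by rewrite !expr0z !mul1r expr1z e2 => /(_ erefl) [].
Qed.

Lemma hg_neq0 m : m != 0 -> hg m != 0.
Proof.
move=> m0; rewrite /hg mulf_neq0 // ?invr_eq0 ?mulf_neq0 ?intr_eq0 ?qq_neq0 //.
rewrite subr_eq0 eq_sym; apply/eqP => e.
have := @gen_eq R q d Hq Hd Hgen 0 (- m) 0 0.
rewrite !expr0z !mul1r Q2_pow mulrN e => /(_ erefl) [_ /eqP].
by rewrite oppr_eq0 (negbTE m0).
Qed.

Lemma Q3pow_neq1 m : m != 0 -> 1 - (Q3^-1) ^ m != 0.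
Proof.
move=> m0; rewrite subr_eq0 eq_sym Q3inv //; apply/eqP.
rewrite expfzMl => e.
have := @gen_eq R q d Hq Hd Hgen m m 0 0.
rewrite !expr0z mulr1 e => /(_ erefl) [/eqP]; by rewrite (negbTE m0).
Qed.

Lemma sum_Heig (kk : 'I_n) w (x m : int) :
  \sum_(s : 'I_n) Heig q d kk w s x m = hg m * (1 - (Q3^-1) ^ m) * (Q1 ^ x * w) ^ m.
Proof.
rewrite /Heig (big_branch Hn +%R) /= !hcoef_lin.
have -> : Q1 ^ x / Q3 * w = Q3^-1 * (Q1 ^ x * w) by rewrite mulrAC mulrC.
set A := Q1 ^ x * w; set g := hg m; set B := Q3^-1.
by rewrite (expfzMl B A) mulrBr mulr1 mulrBl mulrA.
Qed.

Lemma sum_Hcoef (m i j : int) :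
  \sum_(s : 'I_n) Hcoef q d k l u v s m i j
  = hg m * (1 - (Q3^-1) ^ m) * ((Q1 ^ i * u) ^ m + (Q1 ^ j * v) ^ m).
Proof. by rewrite /Hcoef big_split /= !sum_Heig -mulrDr. Qed.


Definition ke (c1 c2 : bool) : int := if c1 then 1 else if c2 then -1 else 0.
Definition he (c1 c2 : bool) (a : C) : C := if c1 then a else if c2 then - (Q3^-1 * a) else 0.

Lemma Keig_pow (kk s : 'I_n) (x : int) :
  Keig q kk s x = q ^ (ke (congr n (x + s%:Z) kk) (congr n (x + s%:Z + 1) kk)).
Proof.
rewrite /Keig /ke; case: ifP => _; first by rewrite expr1z.
case: ifP => _; last by rewrite expr0z.
by rewrite -invr_expz expr1z.
Qed.

Lemma Kcoef_pow (s : 'I_n) (i j : int) : Kcoef q k l s i j =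
  q ^ (ke (congr n (i + s%:Z) k) (congr n (i + s%:Z + 1) k) +
       ke (congr n (j + s%:Z) l) (congr n (j + s%:Z + 1) l)).
Proof. by rewrite /Kcoef !Keig_pow expfzDr. Qed.

Lemma qpow_inj (a b : int) : q ^ a = q ^ b -> a = b.
Proof.
move=> e.
have e2 : Q2 ^ a = Q2 ^ b by rewrite !Q2_pow ![2 * _]mulrC -!exprz_exp e.
have := @gen_eq R q d Hq Hd Hgen 0 a 0 b.
by rewrite !expr0z !mul1r => /(_ e2) [].
Qed.

Lemma Heig1 (kk s : 'I_n) w (x : int) : Heig q d kk w s x 1 =
  hg 1 * he (congr n (x + s%:Z) kk) (congr n (x + s%:Z + 1) kk) (Q1 ^ x * w).
Proof.
rewrite /Heig /he !hcoef_lin !expr1z.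
case: ifP => _ //; case: ifP => _; last by rewrite mulr0.
have -> : Q1 ^ x / Q3 * w = Q3^-1 * (Q1 ^ x * w) by rewrite mulrAC mulrC.
by rewrite mulrN.
Qed.

Lemma onepQ3 : 1 + Q3^-1 != 0.
Proof.
rewrite Q3inv //; apply/eqP => e.
have e1 : Q1 * Q2 = -1.
  by apply/eqP; rewrite -addr_eq0 addrC; apply/eqP.
have e2 : (Q1 * Q2) ^ (2%:Z) = 1 by rewrite e1 -exprnP sqrrN expr1n.
have := @gen_eq R q d Hq Hd Hgen 2 2 0 0.
by rewrite !expr0z mulr1 -expfzMl e2 => /(_ erefl) [].
Qed.

Lemma lem_b (a b : int) : Q1 ^ a * u = Q3^-1 * (Q1 ^ b * u) -> False.
Proof.
rewrite Q3inv // mulrA => e.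
have e' : Q1 ^ a * Q2 ^ 0 = Q1 ^ (b + 1) * Q2 ^ 1.
  apply: (mulIf Hu); rewrite expr0z mulr1 e expr1z expfzDr ?Q1_neq0 // expr1z.
  ring.
by have [_ ] := @gen_eq R q d Hq Hd Hgen _ _ _ _ e'.
Qed.

Lemma swap_step (i j i' j' : int) (s : 'I_n) :
  Q1 ^ i' * u = Q1 ^ j * v -> Q1 ^ j' * v = Q1 ^ i * u -> i != i' ->
  congr n (i + s%:Z) k -> Kcoef q k l s i j = Kcoef q k l s i' j' ->
  Hcoef q d k l u v s 1 i j = Hcoef q d k l u v s 1 i' j' -> congr n (j' + s%:Z) l.
Proof.
move=> hX hY hne cs hK hH.
apply/negPn/negP => nc.
move: hK; rewrite !Kcoef_pow => /qpow_inj; rewrite /ke cs (negbTE nc) => hK.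
have h10 : (1 : int) != 0 by [].
move: hH; rewrite /Hcoef !Heig1 -!mulrDr => /(mulfI (hg_neq0 h10)) hH.
rewrite /he cs (negbTE nc) hX hY in hH.
have ne : Q1 ^ i * u != Q1 ^ j * v.
  apply/eqP => e; move/negP: hne; apply; apply/eqP; apply: (Q1inj Hu).
  by rewrite e hX.
set X := Q1 ^ i * u in hH ne hY; set Y := Q1 ^ j * v in hH ne hX.
move: hK hH.
case: (congr n (j + s%:Z) l); case: (congr n (j + s%:Z + 1) l);
case: (congr n (i' + s%:Z) k); case: (congr n (i' + s%:Z + 1) k);
case: (congr n (j' + s%:Z + 1) l) => /= hK hH; try (exfalso; move: hK; lia).
all: rewrite ?addr0 ?add0r in hH.
all: first [ by move/eqP: ne; rewrite hH
           | (have e : (1 + Q3^-1) * (X - Y) = (X - Q3^-1 * Y) - (Y - Q3^-1 * X) by ring);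
             rewrite hH subrr in e;
             move/eqP: e; rewrite mulf_eq0 (negbTE onepQ3) subr_eq0 (negbTE ne) //
           | (move/eqP: hH; rewrite subr_eq0 -hX => /eqP e; exact: (lem_b e)) ].
Qed.


Lemma sep (NC1 : forall a, congr n a (k%:Z - l%:Z) -> u * Q1 ^ a != v) (i j i' j' : int) :
  (forall s, Kcoef q k l s i j = Kcoef q k l s i' j') ->
  (forall s m, m != 0 -> Hcoef q d k l u v s m i j = Hcoef q d k l u v s m i' j') ->
  (i, j) = (i', j').
Proof.
move=> hK hH.
have hS : forall m : int, m != 0 ->
    (Q1 ^ i * u) ^ m + (Q1 ^ j * v) ^ m = (Q1 ^ i' * u) ^ m + (Q1 ^ j' * v) ^ m.
  move=> m m0.
  have e : \sum_(s : 'I_n) Hcoef q d k l u v s m i j = \sum_(s : 'I_n) Hcoef q d k l u v s m i' j'.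
    by apply: eq_bigr => s _; exact: hH.
  rewrite !sum_Hcoef in e; apply: (mulfI _ e).
  by rewrite mulf_neq0 ?hg_neq0 ?Q3pow_neq1.
have S1 := hS 1 isT; rewrite !expr1z in S1.
have S2 := hS 2 isT; rewrite -!exprnP in S2.
have n1 := @Q1_neq0 R q d Hq Hd.
case: (eqVneq i i') => [ei | ne].
  subst i'.
  have ej : Q1 ^ j * v = Q1 ^ j' * v by apply: (addrI (Q1 ^ i * u)).

  by rewrite (Q1inj Hv ej).
set X := Q1 ^ i * u in S1 S2; set Y := Q1 ^ j * v in S1 S2.
set X' := Q1 ^ i' * u in S1 S2; set Y' := Q1 ^ j' * v in S1 S2.
have F : 2%:R * ((X - X') * (X - Y')) = 0.
  have -> : 2%:R * ((X - X') * (X - Y')) =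
     (X ^+ 2 + Y ^+ 2 - (X' ^+ 2 + Y' ^+ 2)) - ((X + Y) - (X' + Y')) * (X' + Y' - X + Y) by ring.
  by rewrite S1 S2 !subrr mul0r subr0.
have XX' : X != X'.
  apply/eqP => e; move/eqP: ne; apply; exact: (Q1inj Hu e).
move/eqP: F; rewrite mulf_eq0 pnatr_eq0 /= mulf_eq0 subr_eq0 (negbTE XX') /= subr_eq0 => /eqP XY'.
have YX' : Y = X' by move: S1; rewrite XY' addrC => /addIr.
have [s cs] := res_ex Hn (k%:Z - i).
have cs' : congr n (i + s%:Z) k.
  by move: cs; rewrite (congrE n (a':=i + s%:Z) (b':=k%:Z)) //; ring.
have hj := swap_step (esym YX') (esym XY') ne cs' (hK s) (hH s 1 isT).
have c : congr n (i - j') (k%:Z - l%:Z).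
  have := congr_sub cs' hj.
  by rewrite (congrE n (a':=i - j') (b':=k%:Z - l%:Z)) //; ring.
suff E : u * Q1 ^ (i - j') = v by move: (NC1 _ c); rewrite E eqxx.
have nj : Q1 ^ j' != 0 by rewrite expfz_neq0.
apply: (mulfI nj).
rewrite -/Y' -XY' /X expfzDr // -invr_expz.
by field.
Qed.

End Main.



Section Struct.
Variable R : realType.
Local Notation C := R[i].
Variables (n : nat) (q d : C).
Hypothesis Hn : (3 <= n)%N.
Variables (k l : 'I_n) (u v : C).
Hypothesis Hsep : forall i j i' j' : int,
  (forall s, Kcoef q k l s i j = Kcoef q k l s i' j') ->
  (forall s m, m != 0 -> Hcoef q d k l u v s m i j = Hcoef q d k l u v s m i' j') ->
  (i, j) = (i', j').

Definition ev (p : int * int) : vec R := fun p' => if p' == p then 1 else 0.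

Definition diag (g : gen n) (p : int * int) : C :=
  match g with
  | GH s m => Hcoef q d k l u v s m p.1 p.2
  | GK s => Kcoef q k l s p.1 p.2
  | GKinv s => (Kcoef q k l s p.1 p.2)^-1
  | _ => 0
  end.

Lemma act_diag g x p : cartan_gen g -> act q d k l u v g x p = diag g p * x p.
Proof. by case: g. Qed.

Lemma cartan_valid (g : gen n) : cartan_gen g -> valid_gen g.
Proof. by case: g. Qed.

Lemma actD_diag D g x p : cartan_gen g -> inM D x ->
  actD q d k l u v D g x p = diag g p * x p.
Proof.
move=> cg [_ hD]; rewrite /actD act_diag //.
by case: ifP => // Dp; rewrite hD ?Dp // mulr0.
Qed.

Lemma sep_diag p p' : (forall g, cartan_gen g -> diag g p = diag g p') -> p = p'.
Proof.
case: p p' => i j [i' j'] h; apply: Hsep.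
- by move=> s; exact: (h (GK s) isT).
- by move=> s m m0; exact: (h (GH s m) m0).
Qed.

Lemma sep_ex p p' : p != p' -> exists g, cartan_gen g /\ diag g p != diag g p'.
Proof.
move=> ne; apply: NNPP => H; move/negP: ne; apply; apply/eqP; apply: sep_diag.
move=> g cg; apply: NNPP => H2; apply: H; exists g; split => //; exact/eqP.
Qed.

Lemma sum_ev (L : seq (int * int)) (f : int * int -> C) p' : uniq L ->
  \sum_(a <- L) f a * ev a p' = if p' \in L then f p' else 0.
Proof.
elim: L => [|a L IH] /=; first by rewrite big_nil.
move=> /andP [aL uL]; rewrite big_cons IH // in_cons /ev.
case: (eqVneq p' a) => [->|ne] /=; last by rewrite mulr0 add0r.
by rewrite (negbTE aL) mulr1 addr0.
Qed.

Lemma support_ex x : x <> zerov R -> exists p, x p != 0.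
Proof.
move=> nz; apply: NNPP => H; apply: nz; apply: functional_extensionality => p.
apply/eqP; apply: NNPP => H2; apply: H; exists p; exact/negP.
Qed.

Section Closed.
Variables (D : int * int -> bool) (S : vec R -> Prop).
Hypothesis hsub : subspace S.
Hypothesis hin : forall x, S x -> inM D x.
Hypothesis hcl : forall g, valid_gen g -> forall x, S x -> S (actD q d k l u v D g x).

Lemma iso_rec N : forall (L : seq (int * int)) x, (size L <= N)%N -> S x ->
  (forall p', x p' != 0 -> p' \in L) -> forall p, x p != 0 -> S (ev p).
Proof.
case: hsub => [S0 [SD SZ]].
elim: N => [|N IH] L x hL Sx hsupp p xp.
  by case: L hL hsupp => // _ /(_ _ xp).
case: (classic (exists p', [/\ p' \in L, p' != p & x p' != 0])) => [[p' [p'L ne xp']]|H].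
  have [g [cg hg]] := sep_ex ne.
  set c := diag g p'.
  set y := fun z => actD q d k l u v D g x z + (- c) * x z.
  have Sy : S y by apply: SD; [exact: hcl (cartan_valid cg) _ Sx | exact: SZ].
  have yE : forall z, y z = (diag g z - c) * x z.
    by move=> z; rewrite /y (@actD_diag D g x z cg (hin Sx)); ring.
  apply: (IH [seq a <- L | a != p'] y) => //.
  - have h1 := count_predC (pred1 p') L.
    have h2 : count (fun a => a != p') L = count (predC (pred1 p')) L by apply: eq_count.
    have h3 : (0 < count (pred1 p') L)%N.
      by rewrite -has_count; apply/hasP; exists p' => //=.
    rewrite size_filter h2; move: hL h1 h3.
    move: (count_mem p' L) (count (predC (pred1 p')) L) (size L) => a b c0.
    lia.
  - move=> z; rewrite yE mulf_eq0 negb_or => /andP [h1 h2].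
    rewrite mem_filter hsupp // andbT; apply/eqP => e; subst z.
    by rewrite subrr eqxx in h1.
  - by rewrite yE mulf_neq0 // subr_eq0 eq_sym.
have xE : ev p = (fun z => (x p)^-1 * x z).
  apply: functional_extensionality => z; rewrite /ev.
  case: (eqVneq z p) => [->|nzp]; first by rewrite mulVf.
  case: (eqVneq (x z) 0) => [->|xz]; first by rewrite mulr0.
  exfalso; apply: H; exists z; split => //; exact: hsupp.
by rewrite xE; apply: SZ.
Qed.

Lemma iso x p : S x -> x p != 0 -> S (ev p).
Proof.
move=> Sx xp; have [[sq hsq] _] := hin Sx.
apply: (@iso_rec (size sq) sq x) => // p' xp'.
by apply/negPn/negP => /hsq; apply/eqP.
Qed.


Lemma move_gen g p t : S (ev p) -> valid_gen g -> D t -> act q d k l u v g (ev p) t != 0 -> S (ev t).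
Proof.
move=> Sp vg Dt ne; apply: (@iso (actD q d k l u v D g (ev p))); first exact: hcl.
by rewrite /actD Dt.
Qed.


Lemma ev_self p : ev p p = 1.
Proof. by rewrite /ev eqxx. Qed.

Lemma ev_ne p z : z != p -> ev p z = 0.
Proof. by rewrite /ev => /negbTE ->. Qed.

Lemma pair_ne (a b c e : int) : a != c -> (a, b) != (c, e).
Proof. by move=> h; rewrite xpair_eqE negb_and h. Qed.

Lemma pair_ne2 (a b c e : int) : b != e -> (a, b) != (c, e).
Proof. by move=> h; rewrite xpair_eqE negb_and h orbT. Qed.

Lemma actE1 s i j : act q d k l u v (GE s 0) (ev (i, j)) (i + 1, j) = Ecoef1 q d k u s 0 i j.
Proof.
rewrite /act /= addrK ev_self ev_ne ?mulr0 ?addr0 ?mulr1 //.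
by apply: pair_ne; lia.
Qed.

Lemma actE2 s i j : act q d k l u v (GE s 0) (ev (i, j)) (i, j + 1) = Ecoef2 q d k l u v s 0 i j.
Proof.
rewrite /act /= addrK ev_self ev_ne ?mulr0 ?add0r ?mulr1 //.
by apply: pair_ne; lia.
Qed.

Lemma actF1 s i j : act q d k l u v (GF s 0) (ev (i, j)) (i - 1, j) = Fcoef1 q d k l u v s 0 i j.
Proof.
rewrite /act /= subrK ev_self ev_ne ?mulr0 ?addr0 ?mulr1 //.
by apply: pair_ne; lia.
Qed.

Lemma actF2 s i j : act q d k l u v (GF s 0) (ev (i, j)) (i, j - 1) = Fcoef2 q d l v s 0 i j.
Proof.
rewrite /act /= subrK ev_self ev_ne ?mulr0 ?add0r ?mulr1 //.
by apply: pair_ne; lia.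
Qed.


Lemma mvE1 i j : D (i + 1, j) -> S (ev (i, j)) -> S (ev (i + 1, j)).
Proof.
move=> Dt Sp.
have [s cs] := res_ex Hn (k%:Z - i - 1).
have cs' : congr n (s%:Z + i + 1) k.
  by move: cs; rewrite (congrE n (a':=s%:Z + i + 1) (b':=k%:Z)) //; ring.
apply: (@move_gen (GE s 0) _ _ Sp) => //.
by rewrite actE1 /Ecoef1 cs' expr0z oner_neq0.
Qed.

Lemma mvF2 i j : D (i, j - 1) -> S (ev (i, j)) -> S (ev (i, j - 1)).
Proof.
move=> Dt Sp.
have [s cs] := res_ex Hn (l%:Z - j).
have cs' : congr n (s%:Z + j) l.
  by move: cs; rewrite (congrE n (a':=s%:Z + j) (b':=l%:Z)) //; ring.
apply: (@move_gen (GF s 0) _ _ Sp) => //.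
by rewrite actF2 /Fcoef2 cs' expr0z oner_neq0.
Qed.

Lemma mvE2 i j : D (i, j + 1) ->
  (forall s : 'I_n, congr n (s%:Z + j + 1) l -> Kval q d k u s i (q1 q d ^ (j + 1) * v) != 0) ->
  S (ev (i, j)) -> S (ev (i, j + 1)).
Proof.
move=> Dt hK Sp.
have [s cs] := res_ex Hn (l%:Z - j - 1).
have cs' : congr n (s%:Z + j + 1) l.
  by move: cs; rewrite (congrE n (a':=s%:Z + j + 1) (b':=l%:Z)) //; ring.
apply: (@move_gen (GE s 0) _ _ Sp) => //.
by rewrite actE2 /Ecoef2 cs' expr0z mulr1 hK.
Qed.

Lemma mvF1 i j : D (i - 1, j) ->
  (forall s : 'I_n, congr n (s%:Z + i) k -> Kval q d l v s j (q1 q d ^ i * u) != 0) ->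
  S (ev (i, j)) -> S (ev (i - 1, j)).
Proof.
move=> Dt hK Sp.
have [s cs] := res_ex Hn (k%:Z - i).
have cs' : congr n (s%:Z + i) k.
  by move: cs; rewrite (congrE n (a':=s%:Z + i) (b':=k%:Z)) //; ring.
apply: (@move_gen (GF s 0) _ _ Sp) => //.
by rewrite actF1 /Fcoef1 cs' expr0z mulr1 hK.
Qed.

End Closed.

Definition near (p p'' : int * int) :=
  p'' = (p.1 + 1, p.2) \/ p'' = (p.1 - 1, p.2) \/ p'' = (p.1, p.2 + 1) \/ p'' = (p.1, p.2 - 1).
Definition dist (p p' : int * int) : int := `|p.1 - p'.1| + `|p.2 - p'.2|.
Definition conn (D : int * int -> bool) := forall p p', D p -> D p' -> p != p' ->
  exists p'', [/\ D p'', near p p'' & dist p'' p' < dist p p'].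

Lemma reach (D : int * int -> bool) (T : int * int -> Prop) : conn D ->
  (forall p p'', D p -> D p'' -> near p p'' -> T p -> T p'') ->
  forall p0, D p0 -> T p0 -> forall p, D p -> T p.
Proof.
move=> hc hs p0 D0 T0 p Dp.
suff H : forall N : nat, forall p0, D p0 -> T p0 -> dist p0 p <= N%:Z -> T p.
  apply: (H (absz (dist p0 p)) p0 D0 T0).
  by rewrite gez0_abs // /dist addr_ge0.
elim=> [|N IH] p1 D1 T1 hd.
  case: (eqVneq p1 p) => [<- //|ne].
  have [p'' [_ _ hlt]] := hc _ _ D1 Dp ne.
  have : 0 <= dist p'' p by rewrite /dist addr_ge0.
  move: hd hlt; lia.
case: (eqVneq p1 p) => [<- //|ne].
have [p'' [D'' hn hlt]] := hc _ _ D1 Dp ne.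
apply: (IH p'' D'' (hs _ _ D1 D'' hn T1)).
move: hd hlt; lia.
Qed.

Lemma conn_region c : conn (region c).
Proof.
move=> [i j] [i' j']; rewrite /region /= => D1 D2.
rewrite xpair_eqE negb_and => ne.
rewrite /dist /near /=.
case: (ltrP j' j) => h1.
  by exists (i, j - 1); split => /=; [lia | right; right; right | lia].
case: (ltrP i i') => h2.
  by exists (i + 1, j); split => /=; [lia | left | lia].
case: (ltrP i' i) => h3.
  by exists (i - 1, j); split => /=; [lia | right; left | lia].
by exists (i, j + 1); split => /=; [lia | right; right; left | lia].
Qed.

Lemma conn_coregion c : conn (coregion c).
Proof.
move=> [i j] [i' j']; rewrite /coregion /region /= => D1 D2.
rewrite xpair_eqE negb_and => ne.
rewrite /dist /near /=.
case: (ltrP i' i) => h1.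
  by exists (i - 1, j); split => /=; [lia | right; left | lia].
case: (ltrP j j') => h2.
  by exists (i, j + 1); split => /=; [lia | right; right; left | lia].
case: (ltrP j' j) => h3.
  by exists (i, j - 1); split => /=; [lia | right; right; right | lia].
by exists (i + 1, j); split => /=; [lia | left | lia].
Qed.

Lemma conn_full : conn fullregion.
Proof.
move=> [i j] [i' j'] _ _; rewrite xpair_eqE negb_and => ne.
rewrite /dist /near /=.
case: (ltrP i i') => h1.
  by exists (i + 1, j); split => /=; [by [] | left | lia].
case: (ltrP i' i) => h2.
  by exists (i - 1, j); split => /=; [by [] | right; left | lia].
case: (ltrP j j') => h3.
  by exists (i, j + 1); split => /=; [by [] | right; right; left | lia].
by exists (i, j - 1); split => /=; [by [] | right; right; right | lia].
Qed.

Definition goodE2 (D : int * int -> bool) := forall i j, D (i, j) -> D (i, j + 1) ->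
  forall s : 'I_n, congr n (s%:Z + j + 1) l -> Kval q d k u s i (q1 q d ^ (j + 1) * v) != 0.
Definition goodF1 (D : int * int -> bool) := forall i j, D (i, j) -> D (i - 1, j) ->
  forall s : 'I_n, congr n (s%:Z + i) k -> Kval q d l v s j (q1 q d ^ i * u) != 0.

Lemma irr_gen (D : int * int -> bool) p0 : D p0 -> conn D -> goodE2 D -> goodF1 D -> irreducible q d k l u v D.
Proof.
move=> D0 hc hE hF; split.
  exists (ev p0); split.
    split; first by exists [:: p0] => z; rewrite inE => /ev_ne.
    by move=> z nDz; apply: ev_ne; apply/eqP => e; subst z; rewrite D0 in nDz.
  by move=> e; have := congr1 (fun f => f p0) e; rewrite ev_self /zerov => /eqP; rewrite oner_eq0.
move=> S hsub hin hcl [x0 [Sx0 nz]] x [[sq hsq] hD].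
have [p xp] := support_ex nz.
have Dp : D p by have [_ h] := hin _ Sx0; apply/negPn/negP => /h; apply/eqP.
have Sp := @iso D S hsub hin hcl x0 p Sx0 xp.
have allS : forall z, D z -> S (ev z).
  apply: (@reach D (fun z => S (ev z)) hc _ p Dp Sp) => -[i j] p'' Dij D'' hn Sij.
  case: hn => [e|[e|[e|e]]]; subst p''; rewrite /= in D'' *.
  - exact: (@mvE1 D S hsub hin hcl i j D'' Sij).
  - exact: (@mvF1 D S hsub hin hcl i j D'' (hF i j Dij D'') Sij).
  - exact: (@mvE2 D S hsub hin hcl i j D'' (hE i j Dij D'') Sij).
  - exact: (@mvF2 D S hsub hin hcl i j D'' Sij).
case: hsub => [S0 [SD SZ]].
set L := [seq a <- undup sq | D a].
have SL : forall L' : seq (int * int), (forall a, a \in L' -> D a) ->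
    S (fun z => \sum_(a <- L') x a * ev a z).
  elim=> [|a L' IH] hL'.
    have -> : (fun z => \sum_(a <- [::]) x a * ev a z) = zerov R.
      by apply: functional_extensionality => z; rewrite big_nil.
    exact: S0.
  have -> : (fun z => \sum_(b <- a :: L') x b * ev b z) =
            (fun z => (fun z => x a * ev a z) z + (fun z => \sum_(b <- L') x b * ev b z) z).
    by apply: functional_extensionality => z; rewrite big_cons.
  apply: SD; first by apply: SZ; apply: allS; apply: hL'; rewrite inE eqxx.
  by apply: IH => b hb; apply: hL'; rewrite inE hb orbT.
have -> : x = (fun z => \sum_(a <- L) x a * ev a z).
  apply: functional_extensionality => z.
  rewrite sum_ev ?filter_uniq ?undup_uniq //.
  case: ifP => // zL.
  move: zL; rewrite mem_filter mem_undup.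
  case: (boolP (D z)) => Dz /=; last by rewrite hD.
  by move=> /negbT zs; apply/eqP; apply: contraR zs => /eqP h; apply/negPn/negP => /hsq.
by apply: SL => a; rewrite mem_filter => /andP [].
Qed.


Lemma joint_key (D : int * int -> bool) lam x p : joint_eig q d k l u v D lam x -> x p != 0 ->
  D p /\ forall g, cartan_gen g -> diag g p = lam g.
Proof.
move=> [inm [_ hact]] xp.
have Dp : D p by have [_ hD] := inm; apply/negPn/negP => /hD; apply/eqP.
split => // g cg.
have := congr1 (fun f => f p) (hact g cg).
rewrite (@actD_diag D g x p cg inm) /=.
exact: (mulIf xp).
Qed.

Lemma tame_gen (D : int * int -> bool) : tame q d k l u v D.
Proof.
split.
  move=> x [[sq hsq] hD].
  set L := [seq p <- undup sq | x p != 0].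
  exists (size L), (fun t z => x (nth (0, 0) L t) * ev (nth (0, 0) L t) z),
         (fun t g => diag g (nth (0, 0) L t)).
  split.
    move=> t ht; set p := nth (0, 0) L t.
    have pL : p \in L by exact: mem_nth.
    have xp : x p != 0 by move: pL; rewrite mem_filter => /andP [].
    have Dp : D p by apply/negPn/negP => /hD; apply/eqP.
    have inm : inM D (fun z => x p * ev p z).
      split; first by exists [:: p] => z; rewrite inE => /ev_ne ->; rewrite mulr0.
      move=> z nDz; rewrite ev_ne ?mulr0 //.
      by apply/eqP => e; subst z; rewrite Dp in nDz.
    split => //; split.
      move=> e; have := congr1 (fun f => f p) e; rewrite ev_self mulr1 /zerov.
      by move/eqP; rewrite (negbTE xp).
    move=> g cg; apply: functional_extensionality => z.
    rewrite (@actD_diag D g _ z cg inm) /=.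
    case: (eqVneq z p) => [->//|zp]; by rewrite ev_ne // !mulr0.
  apply: functional_extensionality => z.
  have := @big_nth C 0 +%R _ (0, 0) L xpredT (fun a => x a * ev a z); rewrite big_mkord => <-.
  rewrite sum_ev ?filter_uniq ?undup_uniq //.
  case: ifP => // zL.
  move: zL; rewrite mem_filter mem_undup.
  case: (eqVneq (x z) 0) => [//|xz] /=.
  by move=> /negbT zs; apply: hsq.
move=> lam x y hx hy.
have [p xp] := support_ex hx.2.1.
have [p' yp'] := support_ex hy.2.1.
have [_ kx] := joint_key hx xp.
have onlyx : forall z, x z != 0 -> z = p.
  move=> z xz; have [_ kz] := joint_key hx xz.
  by apply: sep_diag => g cg; rewrite kz // kx.
have onlyy : forall z, y z != 0 -> z = p.
  move=> z yz; have [_ kz] := joint_key hy yz.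
  by apply: sep_diag => g cg; rewrite kz // kx.
exists (y p / x p); apply: functional_extensionality => z.
case: (eqVneq z p) => [->|zp]; first by rewrite divfK.
have -> : x z = 0 by apply/eqP; apply: contraR zp => /onlyx ->.
have -> : y z = 0 by apply/eqP; apply: contraR zp => /onlyy ->.
by rewrite mulr0.
Qed.

End Struct.



Section Fin.
Variable R : realType.
Local Notation C := R[i].
Variables (n : nat) (q d : C).
Hypothesis Hn : (3 <= n)%N.
Hypothesis Hq : q != 0.
Hypothesis Hd : d != 0.
Hypothesis Hgen : generic q d.
Variables (k l : 'I_n) (u v : C).
Hypothesis Hu : u != 0.
Hypothesis Hv : v != 0.

Local Notation Q1 := (q1 q d).
Local Notation Q2 := (q2 q).
Local Notation Q3 := (q3 q d).

Let n1 : Q1 != 0 := Q1_neq0 Hq Hd.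
Let n2 : Q2 != 0 := Q2_neq0 Hq.

Lemma psi_den0 (X Y : C) : Y != 0 -> (psi_den (X / Y) == 0) = (X == Y).
Proof.
move=> hY; rewrite /psi_den subr_eq0 eq_sym.
apply/eqP/eqP => [e|->]; last by rewrite divff.
by rewrite -(divfK hY X) e mul1r.
Qed.

Lemma psi_num0 (X Y : C) : Y != 0 -> (psi_num q (X / Y) == 0) = (X == Q2 * Y).
Proof.
move=> hY; rewrite /psi_num subr_eq0 eq_sym /q2.
apply/eqP/eqP => [e|->].
  have e' : X / Y = q * q by rewrite -[X / Y](mulVKf Hq) e.
  by rewrite -(divfK hY X) e' expr2.
by rewrite expr2; field; rewrite hY Hq.
Qed.

Lemma Mcore (a1 b1 a2 b2 : int) :
  (Q1 ^ a1 * Q2 ^ b1 * u == Q1 ^ a2 * Q2 ^ b2 * v) = (v == u * Q1 ^ (a1 - a2) * Q2 ^ (b1 - b2)).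
Proof.
have h1 : Q1 ^ a2 != 0 by rewrite expfz_neq0.
have h2 : Q2 ^ b2 != 0 by rewrite expfz_neq0.
rewrite !expfzDr // -!invr_expz.
apply/eqP/eqP => [e|->].
  apply: (mulfI (mulf_neq0 h1 h2)); rewrite -e; field; by rewrite h1 h2.
by field; rewrite h1 h2.
Qed.

Lemma normA (x : int) w : Q1 ^ x * w = Q1 ^ x * Q2 ^ 0 * w.
Proof. by rewrite expr0z mulr1. Qed.

Lemma normB (x : int) w : Q1 ^ x / Q3 * w = Q1 ^ (x + 1) * Q2 ^ 1 * w.
Proof. by rewrite Q3inv // expfzDr // !expr1z !mulrA. Qed.

Lemma normC (x : int) w : Q2 * (Q1 ^ x * w) = Q1 ^ x * Q2 ^ 1 * w.
Proof. by rewrite expr1z mulrA [Q2 * _]mulrC. Qed.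


Lemma csub (a b a' b' x : int) : congr n a b -> congr n a' b' -> a - a' = x -> congr n x (b - b').
Proof. by move=> h1 h2 <-; exact: congr_sub. Qed.

Lemma E2_den0 (s : 'I_n) (i j : int) : congr n (s%:Z + j + 1) l ->
  Kden q d k u s i (Q1 ^ (j + 1) * v) = 0 ->
  exists a, congr n a (k%:Z - l%:Z) /\ v = u * Q1 ^ a * Q2 ^ 0.
Proof.
move=> cs; have Yn : Q1 ^ (j + 1) * v != 0 by rewrite mulf_neq0 ?expfz_neq0.
rewrite /Kden; case: ifP => c1.
  move/eqP; rewrite psi_den0 // (normA i u) (normA (j + 1) v) Mcore subrr => /eqP ->.
  exists (i - (j + 1)); split => //; apply: (csub c1 cs); ring.
case: ifP => c2; last by move/eqP; rewrite oner_eq0.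
move/eqP; rewrite psi_num0 // normB normC Mcore subrr => /eqP ->.
exists (i + 1 - (j + 1)); split => //; apply: (csub c2 cs); ring.
Qed.

Lemma F1_den0 (s : 'I_n) (i j : int) : congr n (s%:Z + i) k ->
  Kden q d l v s j (Q1 ^ i * u) = 0 ->
  exists a, congr n a (k%:Z - l%:Z) /\ v = u * Q1 ^ a * Q2 ^ 0.
Proof.
move=> cs; have Yn : Q1 ^ i * u != 0 by rewrite mulf_neq0 ?expfz_neq0.
rewrite /Kden; case: ifP => c1.
  move/eqP; rewrite psi_den0 // eq_sym (normA i u) (normA j v) Mcore subrr => /eqP ->.
  exists (i - j); split => //; apply: (csub cs c1); ring.
case: ifP => c2; last by move/eqP; rewrite oner_eq0.
move/eqP; rewrite psi_num0 // normB normC eq_sym Mcore subrr => /eqP ->.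
exists (i - (j + 1)); split => //; apply: (csub cs c2); ring.
Qed.


Lemma E2_num0 (s : 'I_n) (i j : int) : congr n (s%:Z + j + 1) l ->
  Knum q d k u s i (Q1 ^ (j + 1) * v) = 0 ->
  (congr n (i - j - 1) (k%:Z - l%:Z) /\ v = u * Q1 ^ (i - j - 1) * Q2 ^ (-1)) \/
  (congr n (i - j) (k%:Z - l%:Z) /\ v = u * Q1 ^ (i - j) * Q2 ^ 1).
Proof.
move=> cs; have Yn : Q1 ^ (j + 1) * v != 0 by rewrite mulf_neq0 ?expfz_neq0.
rewrite /Knum; case: ifP => c1.
  move/eqP; rewrite psi_num0 // (normA i u) normC Mcore => /eqP ->.
  left; split; first by apply: (csub c1 cs); ring.
  by rewrite sub0r (_ : i - (j + 1) = i - j - 1) //; ring.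
case: ifP => c2; last by move/eqP; rewrite oner_eq0.
move/eqP; rewrite psi_den0 // normB (normA (j + 1) v) Mcore => /eqP ->.
right; split; first by apply: (csub c2 cs); ring.
by rewrite subr0 (_ : i + 1 - (j + 1) = i - j) //; ring.
Qed.

Lemma F1_num0 (s : 'I_n) (i j : int) : congr n (s%:Z + i) k ->
  Knum q d l v s j (Q1 ^ i * u) = 0 ->
  (congr n (i - j) (k%:Z - l%:Z) /\ v = u * Q1 ^ (i - j) * Q2 ^ 1) \/
  (congr n (i - j - 1) (k%:Z - l%:Z) /\ v = u * Q1 ^ (i - j - 1) * Q2 ^ (-1)).
Proof.
move=> cs; have Yn : Q1 ^ i * u != 0 by rewrite mulf_neq0 ?expfz_neq0.
rewrite /Knum; case: ifP => c1.
  move/eqP; rewrite psi_num0 // normC (normA j v) eq_sym Mcore => /eqP ->.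
  left; split; first by apply: (csub cs c1); ring.
  by rewrite subr0.
case: ifP => c2; last by move/eqP; rewrite oner_eq0.
move/eqP; rewrite psi_den0 // normB (normA i u) eq_sym Mcore => /eqP ->.
right; split; first by apply: (csub cs c2); ring.
by rewrite sub0r (_ : i - (j + 1) = i - j - 1) //; ring.
Qed.


Lemma cc (a b a' b' x y : int) : congr n a b -> congr n a' b' -> a - a' = x -> b - b' = y -> congr n x y.
Proof.
move=> h1 h2 e1 e2; have := congr_sub h1 h2; rewrite e1 e2 //.
Qed.

Lemma ca (a b a' b' x y : int) : congr n a b -> congr n a' b' -> a + a' = x -> b + b' = y -> congr n x y.
Proof.
rewrite /congr => h1 h2 e1 e2; have := rpredD h1 h2.
by rewrite (_ : a - b + (a' - b') = x - y) //; rewrite -e1 -e2; ring.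
Qed.

Lemma cne (x y : int) : congr n x y -> congr n (x - 1) y -> False.
Proof. by move=> h1 h2; apply: (congr_01 Hn h2); rewrite subrK. Qed.

Lemma E2_van2 (s : 'I_n) (i j : int) : congr n (s%:Z + j + 1) l ->
  congr n (i - j) (k%:Z - l%:Z) -> v = u * Q1 ^ (i - j) * Q2 ^ 1 ->
  Knum q d k u s i (Q1 ^ (j + 1) * v) = 0.
Proof.
move=> cs cb hv; have Yn : Q1 ^ (j + 1) * v != 0 by rewrite mulf_neq0 ?expfz_neq0.
rewrite /Knum; case: ifP => c1.
  exfalso; apply: (cne cb); apply: (csub c1 cs); ring.
have -> : congr n (i + s%:Z + 1) k by apply: (ca cb cs); ring.
apply/eqP; rewrite psi_den0 // normB (normA (j + 1) v) Mcore hv.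
by rewrite subr0 (_ : i + 1 - (j + 1) = i - j) //; ring.
Qed.

Lemma E2_van3 (s : 'I_n) (i j : int) : congr n (s%:Z + j + 1) l ->
  congr n (i - j - 1) (k%:Z - l%:Z) -> v = u * Q1 ^ (i - j - 1) * Q2 ^ (-1) ->
  Knum q d k u s i (Q1 ^ (j + 1) * v) = 0.
Proof.
move=> cs cb hv; have Yn : Q1 ^ (j + 1) * v != 0 by rewrite mulf_neq0 ?expfz_neq0.
rewrite /Knum.
have -> : congr n (i + s%:Z) k by apply: (ca cb cs); ring.
apply/eqP; rewrite psi_num0 // (normA i u) normC Mcore hv.
by rewrite sub0r (_ : i - (j + 1) = i - j - 1) //; ring.
Qed.

Lemma F1_van2 (s : 'I_n) (i j : int) : congr n (s%:Z + i) k ->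
  congr n (i - j) (k%:Z - l%:Z) -> v = u * Q1 ^ (i - j) * Q2 ^ 1 ->
  Knum q d l v s j (Q1 ^ i * u) = 0.
Proof.
move=> cs cb hv; have Yn : Q1 ^ i * u != 0 by rewrite mulf_neq0 ?expfz_neq0.
rewrite /Knum.
have -> : congr n (j + s%:Z) l by apply: (cc cs cb); ring.
apply/eqP; rewrite psi_num0 // normC (normA j v) eq_sym Mcore hv.
by rewrite subr0.
Qed.

Lemma F1_van3 (s : 'I_n) (i j : int) : congr n (s%:Z + i) k ->
  congr n (i - j - 1) (k%:Z - l%:Z) -> v = u * Q1 ^ (i - j - 1) * Q2 ^ (-1) ->
  Knum q d l v s j (Q1 ^ i * u) = 0.
Proof.
move=> cs cb hv; have Yn : Q1 ^ i * u != 0 by rewrite mulf_neq0 ?expfz_neq0.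
rewrite /Knum; case: ifP => c1.
  exfalso; apply: (cne (cc cs c1 _ _) cb); ring.
have -> : congr n (j + s%:Z + 1) l by apply: (cc cs cb); ring.
apply/eqP; rewrite psi_den0 // normB (normA i u) eq_sym Mcore hv.
by rewrite sub0r (_ : i - (j + 1) = i - j - 1) //; ring.
Qed.


Lemma cuniq (a b a' b' : int) : v = u * Q1 ^ a * Q2 ^ b -> v = u * Q1 ^ a' * Q2 ^ b' -> a = a' /\ b = b'.
Proof.
move=> h1; rewrite h1 -!mulrA => /(mulfI Hu) e.
exact: (gen_eq Hq Hd Hgen e).
Qed.

Lemma congr_m (a : int) : congr n a (k%:Z - l%:Z) -> exists m : int, a = n%:Z * m + k%:Z - l%:Z.
Proof.
rewrite /congr => /dvdzP [t e]; exists t.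
have -> : a = a - (k%:Z - l%:Z) + (k%:Z - l%:Z) by ring.
rewrite e; ring.
Qed.

Lemma m_congr (m : int) : congr n (n%:Z * m + k%:Z - l%:Z) (k%:Z - l%:Z).
Proof.
rewrite /congr (_ : n%:Z * m + k%:Z - l%:Z - (k%:Z - l%:Z) = n%:Z * m); last by ring.
by rewrite dvdz_mulr.
Qed.

Lemma Kval_neq0 (c1 c2 : C) : c1 != 0 -> c2 != 0 -> c1 / c2 != 0.
Proof. by move=> h1 h2; rewrite mulf_neq0 ?invr_eq0. Qed.

Section WithNC1.
Hypothesis NC1 : forall a, congr n a (k%:Z - l%:Z) -> u * Q1 ^ a != v.

Lemma den_ok (a : int) : congr n a (k%:Z - l%:Z) -> v = u * Q1 ^ a * Q2 ^ 0 -> False.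
Proof. by move=> c e; move: (NC1 c); rewrite e expr0z mulr1 eqxx. Qed.

Lemma goodE2_of (D : int * int -> bool) :
  (forall i j, D (i, j) -> D (i, j + 1) ->
     ~ (congr n (i - j - 1) (k%:Z - l%:Z) /\ v = u * Q1 ^ (i - j - 1) * Q2 ^ (-1)) /\
     ~ (congr n (i - j) (k%:Z - l%:Z) /\ v = u * Q1 ^ (i - j) * Q2 ^ 1)) ->
  goodE2 q d k l u v D.
Proof.
move=> H i j D1 D2 s cs; rewrite /Kval; apply: Kval_neq0.
  apply/eqP => /(E2_num0 cs); have [h1 h2] := H i j D1 D2; tauto.
apply/eqP => /(E2_den0 cs) [a [ca' ea]]; exact: den_ok ca' ea.
Qed.

Lemma goodF1_of (D : int * int -> bool) :
  (forall i j, D (i, j) -> D (i - 1, j) ->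
     ~ (congr n (i - j) (k%:Z - l%:Z) /\ v = u * Q1 ^ (i - j) * Q2 ^ 1) /\
     ~ (congr n (i - j - 1) (k%:Z - l%:Z) /\ v = u * Q1 ^ (i - j - 1) * Q2 ^ (-1))) ->
  goodF1 q d k l u v D.
Proof.
move=> H i j D1 D2 s cs; rewrite /Kval; apply: Kval_neq0.
  apply/eqP => /(F1_num0 cs); have [h1 h2] := H i j D1 D2; tauto.
apply/eqP => /(F1_den0 cs) [a [ca' ea]]; exact: den_ok ca' ea.
Qed.

Lemma tame_irr_gen (D : int * int -> bool) p0 : D p0 -> conn D ->
  goodE2 q d k l u v D -> goodF1 q d k l u v D -> tame_irr_level1 q d k l u v D.
Proof.
move=> D0 hc hE hF.
have Hsep := sep Hn Hq Hd Hgen Hu Hv NC1.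
split; first exact: tame_gen Hsep D.
split; first (have := @irr_gen R n q d Hn k l u v Hsep D p0 D0 hc hE hF; exact).
exact: level1_all.
Qed.

End WithNC1.


Lemma sub_gen (c : int) :
  (forall (s : 'I_n) i j, congr n (s%:Z + j + 1) l -> i = j + c ->
      Knum q d k u s i (Q1 ^ (j + 1) * v) = 0) ->
  (forall (s : 'I_n) i j, congr n (s%:Z + i) k -> i = j + c ->
      Knum q d l v s j (Q1 ^ i * u) = 0) ->
  is_submodule q d k l u v (region c).
Proof.
move=> VE VF g _ x [[sq hsq] hD].
split.
  exists ([seq (a.1 + 1, a.2) | a <- sq] ++ [seq (a.1, a.2 + 1) | a <- sq] ++
          [seq (a.1 - 1, a.2) | a <- sq] ++ [seq (a.1, a.2 - 1) | a <- sq] ++ sq).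
  move=> [i j]; rewrite !mem_cat !negb_or => /and5P [h1 h2 h3 h4 h5].
  have x1 : x (i - 1, j) = 0.
    apply: hsq; apply: contra h1 => h; apply/mapP; exists (i - 1, j) => //=; by rewrite subrK.
  have x2 : x (i, j - 1) = 0.
    apply: hsq; apply: contra h2 => h; apply/mapP; exists (i, j - 1) => //=; by rewrite subrK.
  have x3 : x (i + 1, j) = 0.
    apply: hsq; apply: contra h3 => h; apply/mapP; exists (i + 1, j) => //=; by rewrite addrK.
  have x4 : x (i, j + 1) = 0.
    apply: hsq; apply: contra h4 => h; apply/mapP; exists (i, j + 1) => //=; by rewrite addrK.
  have x5 : x (i, j) = 0 by apply: hsq.
  by case: g => [s m|s m|s m|s|s] /=; rewrite ?x1 ?x2 ?x3 ?x4 ?x5 ?mulr0 ?addr0.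
move=> [i j]; rewrite /region /= => nr.
case: g => [s m|s m|s m|s|s] /=.
- rewrite (hD (i - 1, j)) ?mulr0 ?add0r; last by rewrite /region /=; lia.
  case: (boolP (j - 1 + c <= i)) => r.
    have e : i = j - 1 + c by lia.
    rewrite /Ecoef2; case: ifP => cs; last by rewrite mul0r.
    by rewrite /Kval (VE s i (j - 1) cs e) !mul0r.
  by rewrite (hD (i, j - 1)) ?mulr0.
- rewrite (hD (i, j + 1)) ?mulr0 ?addr0; last by rewrite /region /=; lia.
  case: (boolP (j + c <= i + 1)) => r.
    have e : i + 1 = j + c by lia.
    rewrite /Fcoef1; case: ifP => cs; last by rewrite mul0r.
    by rewrite /Kval (VF s (i + 1) j cs e) !mul0r.
  by rewrite (hD (i + 1, j)) ?mulr0.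
- by rewrite (hD (i, j)) ?mulr0.
- by rewrite (hD (i, j)) ?mulr0.
- by rewrite (hD (i, j)) ?mulr0.
Qed.


Lemma e1 (a : int) : u * Q1 ^ a = u * Q1 ^ a * Q2 ^ 0.
Proof. by rewrite expr0z mulr1. Qed.
Lemma e2 (a : int) : u * Q2 * Q1 ^ a = u * Q1 ^ a * Q2 ^ 1.
Proof. by rewrite expr1z mulrAC. Qed.
Lemma e3 (a : int) : u * Q2^-1 * Q1 ^ a = u * Q1 ^ a * Q2 ^ (-1).
Proof. by rewrite -invr_expz expr1z mulrAC. Qed.

Lemma part1 : (~ well_defined q d k l u v) <->
  exists m : int, u * Q1 ^ (n%:Z * m + k%:Z - l%:Z) = v.
Proof.
split.
  move=> nwd; apply: NNPP => nex; apply: nwd => s i j; split.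
    move=> cs; apply/negP => /andP [/eqP h0 _].
    have [a [ca' ea]] := E2_den0 cs h0.
    apply: nex; have [m em] := congr_m ca'; exists m; by rewrite -em ea expr0z mulr1.
  move=> cs; apply/negP => /andP [/eqP h0 _].
  have [a [ca' ea]] := F1_den0 cs h0.
  apply: nex; have [m em] := congr_m ca'; exists m; by rewrite -em ea expr0z mulr1.
move=> [m em] wd.
have [s cs] := res_ex Hn (l%:Z - 1).
have cs' : congr n (s%:Z + 0 + 1) l.
  by move: cs; rewrite (congrE n (a':=s%:Z + 0 + 1) (b':=l%:Z)) //; ring.
set i := n%:Z * m + k%:Z - l%:Z + 1.
have [h _] := wd s i 0.
move: (h cs') => /negP; apply.
have Yn : Q1 ^ (0 + 1) * v != 0 by rewrite mulf_neq0 ?expfz_neq0.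
have c1 : congr n (i + s%:Z) k by apply: (ca (m_congr m) cs'); rewrite /i; ring.
have hv : v = u * Q1 ^ (n%:Z * m + k%:Z - l%:Z) * Q2 ^ 0 by rewrite -e1 em.
have ei : i - (0 + 1) = n%:Z * m + k%:Z - l%:Z by rewrite /i; ring.
rewrite /Kpole /Kden /Knum c1; apply/andP; split.
  by rewrite psi_den0 // (normA i u) (normA (0 + 1) v) Mcore ei subrr hv.
rewrite psi_num0 // (normA i u) normC Mcore ei; apply/eqP => e.
by have [_ ] := cuniq hv e.
Qed.


Lemma part2 (m : int) : u * Q2 * Q1 ^ (n%:Z * m + k%:Z - l%:Z) = v ->
  is_submodule q d k l u v (region (n%:Z * m + k%:Z - l%:Z)) /\
  tame_irr_level1 q d k l u v (region (n%:Z * m + k%:Z - l%:Z)) /\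
  tame_irr_level1 q d k l u v (coregion (n%:Z * m + k%:Z - l%:Z)).
Proof.
set M := n%:Z * m + k%:Z - l%:Z.
rewrite e2 => hv; symmetry in hv.
have NC1 : forall a, congr n a (k%:Z - l%:Z) -> u * Q1 ^ a != v.
  move=> a _; apply/eqP => e; move: e; rewrite e1 => e; symmetry in e.
  by have [_ ] := cuniq hv e.
have cM : congr n M (k%:Z - l%:Z) by apply: m_congr.
split.
  apply: sub_gen.
    move=> s i j cs e; apply: E2_van2 cs _ _.
      by rewrite (_ : i - j = M) //; rewrite e; ring.
    by rewrite (_ : i - j = M) //; rewrite e; ring.
  move=> s i j cs e; apply: F1_van2 cs _ _.
    by rewrite (_ : i - j = M) //; rewrite e; ring.
  by rewrite (_ : i - j = M) //; rewrite e; ring.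
split.
  apply: (@tame_irr_gen NC1 _ (M, 0)); first by rewrite /region /=; lia.
  - exact: conn_region.
  - apply: (goodE2_of NC1) => i j; rewrite /region /= => D1 D2; split.
      by move=> [_ e]; have [_ ] := cuniq hv e.
    move=> [_ e]; have [e' _] := cuniq hv e; move: D2; lia.
  - apply: (goodF1_of NC1) => i j; rewrite /region /= => D1 D2; split.
      move=> [_ e]; have [e' _] := cuniq hv e; move: D2; lia.
    by move=> [_ e]; have [_ ] := cuniq hv e.
apply: (@tame_irr_gen NC1 _ (M - 1, 0)); first by rewrite /coregion /region /=; lia.
- exact: conn_coregion.
- apply: (goodE2_of NC1) => i j; rewrite /coregion /region /= => D1 D2; split.
    by move=> [_ e]; have [_ ] := cuniq hv e.
  move=> [_ e]; have [e' _] := cuniq hv e; move: D1; lia.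
- apply: (goodF1_of NC1) => i j; rewrite /coregion /region /= => D1 D2; split.
    move=> [_ e]; have [e' _] := cuniq hv e; move: D1; lia.
  by move=> [_ e]; have [_ ] := cuniq hv e.
Qed.

Lemma part3 (m : int) : u * Q2^-1 * Q1 ^ (n%:Z * m + k%:Z - l%:Z) = v ->
  is_submodule q d k l u v (region (n%:Z * m + k%:Z - l%:Z + 1)) /\
  tame_irr_level1 q d k l u v (region (n%:Z * m + k%:Z - l%:Z + 1)) /\
  tame_irr_level1 q d k l u v (coregion (n%:Z * m + k%:Z - l%:Z + 1)).
Proof.
set M := n%:Z * m + k%:Z - l%:Z.
rewrite e3 => hv; symmetry in hv.
have NC1 : forall a, congr n a (k%:Z - l%:Z) -> u * Q1 ^ a != v.
  move=> a _; apply/eqP => e; move: e; rewrite e1 => e; symmetry in e.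
  by have [_ ] := cuniq hv e.
have cM : congr n M (k%:Z - l%:Z) by apply: m_congr.
split.
  apply: sub_gen.
    move=> s i j cs e; apply: E2_van3 cs _ _.
      by rewrite (_ : i - j - 1 = M) //; rewrite e; ring.
    by rewrite (_ : i - j - 1 = M) //; rewrite e; ring.
  move=> s i j cs e; apply: F1_van3 cs _ _.
    by rewrite (_ : i - j - 1 = M) //; rewrite e; ring.
  by rewrite (_ : i - j - 1 = M) //; rewrite e; ring.
split.
  apply: (@tame_irr_gen NC1 _ (M + 1, 0)); first by rewrite /region /=; lia.
  - exact: conn_region.
  - apply: (goodE2_of NC1) => i j; rewrite /region /= => D1 D2; split.
      move=> [_ e]; have [e' _] := cuniq hv e; move: D2; lia.
    by move=> [_ e]; have [_ ] := cuniq hv e.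
  - apply: (goodF1_of NC1) => i j; rewrite /region /= => D1 D2; split.
      by move=> [_ e]; have [_ ] := cuniq hv e.
    move=> [_ e]; have [e' _] := cuniq hv e; move: D2; lia.
apply: (@tame_irr_gen NC1 _ (M, 0)); first by rewrite /coregion /region /=; lia.
- exact: conn_coregion.
- apply: (goodE2_of NC1) => i j; rewrite /coregion /region /= => D1 D2; split.
    move=> [_ e]; have [e' _] := cuniq hv e; move: D1; lia.
  by move=> [_ e]; have [_ ] := cuniq hv e.
- apply: (goodF1_of NC1) => i j; rewrite /coregion /region /= => D1 D2; split.
    by move=> [_ e]; have [_ ] := cuniq hv e.
  move=> [_ e]; have [e' _] := cuniq hv e; move: D1; lia.
Qed.

Lemma part4 :
  (~ exists m : int, u * Q1 ^ (n%:Z * m + k%:Z - l%:Z) = v) ->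
  (~ exists m : int, u * Q2 * Q1 ^ (n%:Z * m + k%:Z - l%:Z) = v) ->
  (~ exists m : int, u * Q2^-1 * Q1 ^ (n%:Z * m + k%:Z - l%:Z) = v) ->
  tame_irr_level1 q d k l u v fullregion.
Proof.
move=> H1 H2 H3.
have NC1 : forall a, congr n a (k%:Z - l%:Z) -> u * Q1 ^ a != v.
  move=> a c; apply/eqP => e; apply: H1; have [m em] := congr_m c.
  by exists m; rewrite -em.
apply: (@tame_irr_gen NC1 _ (0, 0)) => //.
- exact: conn_full.
- apply: (goodE2_of NC1) => i j _ _; split.
    move=> [c e]; apply: H3; have [m em] := congr_m c; exists m; by rewrite e3 -em.
  move=> [c e]; apply: H2; have [m em] := congr_m c; exists m; by rewrite e2 -em.
- apply: (goodF1_of NC1) => i j _ _; split.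
    move=> [c e]; apply: H2; have [m em] := congr_m c; exists m; by rewrite e2 -em.
  move=> [c e]; apply: H3; have [m em] := congr_m c; exists m; by rewrite e3 -em.
Qed.

End Fin.

Theorem mainTheorem3 (R : realType) (n : nat) (q d : R[i])
  (Hn : (3 <= n)%N) (Hq : q != 0) (Hd : d != 0) (Hgen : generic q d)
  (k l : 'I_n) (u v : R[i]) (Hu : u != 0) (Hv : v != 0) :
  let N (m : int) : int := n%:Z * m + k%:Z - l%:Z in
  (* 1 *)
  ((~ well_defined q d k l u v) <-> exists m : int, u * q1 q d ^ N m = v) /\
  (* 2 *)
  (forall m : int, u * q2 q * q1 q d ^ N m = v ->
     is_submodule q d k l u v (region (N m)) /\
     tame_irr_level1 q d k l u v (region (N m)) /\
     tame_irr_level1 q d k l u v (coregion (N m))) /\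
  (* 3 *)
  (forall m : int, u * (q2 q)^-1 * q1 q d ^ N m = v ->
     is_submodule q d k l u v (region (N m + 1)) /\
     tame_irr_level1 q d k l u v (region (N m + 1)) /\
     tame_irr_level1 q d k l u v (coregion (N m + 1))) /\
  (* 4 *)
  ((~ exists m : int, u * q1 q d ^ N m = v) ->
   (~ exists m : int, u * q2 q * q1 q d ^ N m = v) ->
   (~ exists m : int, u * (q2 q)^-1 * q1 q d ^ N m = v) ->
   tame_irr_level1 q d k l u v (fullregion)).
Proof.
move=> N; rewrite /N.
split; first exact: (part1 Hn Hq Hd Hgen k l Hu Hv).
split; first by move=> m; exact: (part2 Hn Hq Hd Hgen Hu Hv).
split; first by move=> m; exact: (part3 Hn Hq Hd Hgen Hu Hv).
exact: (part4 Hn Hq Hd Hgen Hu Hv).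
Qed.
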